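(* Let $V$ be a finite-dimensional real vector space and $\mathcal{C}\subset V$ an open convex cone with closure $\overline{\mathcal{C}}$. Every completely monotone function $f:\mathcal{C}\rightarrow\mathbb{R}_{+}$ satisfies \[ \sum_{i=1}^{n}f(x_{i})-\sum_{1\leq i<j\leq n}f(x_{i}+x_{j})+\cdots+(-1)^{n-1}f\Bigl(\sum_{i=1}^{n}x_{i}\Bigr)\geq 0 \] for all $x_{1},\ldots,x_{n}\in\mathcal{C}$ and $n\geq1$ (the general term being $(-1)^{k-1}\sum_{1\le i_1<\cdots<i_k\le n} f(x_{i_1}+\cdots+x_{i_k})$). If moreover $f$ admits a continuous extension to $\overline{\mathcal{C}}$, then \[ f(0)\geq\sum_{i=1}^{n}f(x_{i})-\sum_{1\leq i<j\leq n}f(x_{i}+x_{j})+\cdots+(-1)^{n-1}f\Bigl(\sum_{i=1}^{n}x_{i}\Bigr)\geq 0 \] for all $x_{1},\ldots,x_{n}\in\overline{\mathcal{C}}$ and $n\geq1$.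
   Context: A function $f:\mathcal{C}\rightarrow\mathbb{R}_{+}$ on an open convex cone $\mathcal{C}$ is completely monotone if $f$ is $C^{\infty}$ on $\mathcal{C}$ and for all integers $k\geq1$ and all $v_{1},\ldots,v_{k}\in\mathcal{C}$, $(-1)^{k}D_{v_{1}}\cdots D_{v_{k}}f(x)\geq0$ for all $x\in\mathcal{C}$, where $D_{v}$ is the directional derivative along $v$. *)

(* Defs.v *)
From HB Require Import structures.
From mathcomp Require Import all_boot all_order all_algebra.
From mathcomp Require Import all_classical all_reals all_analysis.
Set Implicit Arguments. Unset Strict Implicit. Unset Printing Implicit Defensive.
Import Order.TTheory GRing.Theory Num.Theory.
Import numFieldNormedType.Exports.
Local Open Scope classical_set_scope.
Local Open Scope ring_scope.

Definition is_cone {R : realType} {d : nat} (C : set 'rV[R]_d) : Prop :=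
  forall x (t : R), C x -> 0 < t -> C (t *: x).

Definition is_convex {R : realType} {d : nat} (C : set 'rV[R]_d) : Prop :=
  forall x y (t : R), C x -> C y -> 0 <= t -> t <= 1 -> C (t *: x + (1 - t) *: y).

Definition open_convex_cone {R : realType} {d : nat} (C : set 'rV[R]_d) : Prop :=
  open C /\ is_convex C /\ is_cone C.

Fixpoint iter_dir_deriv {R : realType} {d : nat}
    (f : 'rV[R]_d -> R) (vs : seq 'rV[R]_d) : 'rV[R]_d -> R :=
  match vs with
  | [::] => f
  | v :: vs' => fun x => 'D_v (iter_dir_deriv f vs') x
  end.

(* f is C^infinity on the open set C: every iterated directional derivative
   is (Frechet) differentiable at every point of C. *)
Definition smooth_on {R : realType} {d : nat} (C : set 'rV[R]_d)
    (f : 'rV[R]_d -> R) : Prop :=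
  forall (vs : seq 'rV[R]_d) x, C x -> differentiable (iter_dir_deriv f vs) x.

Definition completely_monotone {R : realType} {d : nat} (C : set 'rV[R]_d)
    (f : 'rV[R]_d -> R) : Prop :=
  (forall x, C x -> 0 <= f x) /\
  smooth_on C f /\
  forall (vs : seq 'rV[R]_d), (1 <= size vs)%N ->
    (forall v, v \in vs -> C v) ->
    forall x, C x -> 0 <= (-1) ^+ size vs * iter_dir_deriv f vs x.

Definition incl_excl_sum {R : realType} {d n : nat}
    (f : 'rV[R]_d -> R) (x : 'I_n -> 'rV[R]_d) : R :=
  \sum_(S : {set 'I_n} | (0 < #|S|)%N)
     (-1) ^+ (#|S|.-1) * f (\sum_(i in S) x i).

(* Main.v *)
Require Import Defs.
From HB Require Import structures.
From mathcomp Require Import all_boot all_order all_algebra.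
From mathcomp Require Import all_classical all_reals all_analysis.
From mathcomp Require Import ring lra.
Import Order.TTheory GRing.Theory Num.Theory.
Import numFieldNormedType.Exports.
Local Open Scope classical_set_scope.
Local Open Scope ring_scope.
Section Comb.
Variables (R : realType) (d n : nat).
Local Notation V := 'rV[R]_d.
Implicit Types (A T : {set 'I_n}).

Lemma split_sub (W : nmodType) (F : {set 'I_n} -> W) (A : {set 'I_n}) (a : 'I_n) : a \in A ->
  \sum_(T : {set 'I_n} | T \subset A) F T = \sum_(T : {set 'I_n} | T \subset A :\ a) (F T + F (a |: T)).
Proof.
move=> aA; rewrite big_split /= (bigID (fun T : {set 'I_n} => a \in T)) /= addrC; congr (_ + _).
  by apply: eq_bigl => T; rewrite subsetD1.
rewrite (reindex_onto (fun T => a |: T) (fun T => T :\ a)); last first.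
  by move=> T /andP[_ aT]; rewrite finset.setD1K.
apply: eq_bigl => T; rewrite setU11 andbT finset.subUset finset.sub1set aA /=.
rewrite subsetD1; case aT: (a \in T) => /=.
  have -> : ((a |: T) :\ a == T) = false.
    by apply/negbTE/eqP => E; move: aT; rewrite -E !inE eqxx.
  by rewrite !andbF.
by rewrite setU1K ?aT ?eqxx ?andbT.
Qed.


Definition Esum (x : 'I_n -> V) A (G : V -> R) (z : V) : R :=
  \sum_(T : {set 'I_n} | T \subset A)
     (-1) ^+ (#|A| - #|T|) * G (z + \sum_(i in T) x i).

Lemma Esum_split x A a G z : a \in A ->
  Esum x A G z = Esum x (A :\ a) G (z + x a) - Esum x (A :\ a) G z.
Proof.
move=> aA; rewrite /Esum (@split_sub _ _ A a aA) -sumrB; apply: eq_bigr => T.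
move=> TAa; have /andP[TA aT] : (T \subset A) && (a \notin T) by rewrite -subsetD1.
have tm : (#|T| <= #|A :\ a|)%N by apply: subset_leq_card.
rewrite big_setU1 //= cardsU1 aT (cardsD1 a A) aA add1n subSS subSn //.
by rewrite exprS mulN1r mulNr addrA addrC.
Qed.

Lemma Esum0 x G z : Esum x finset.set0 G z = G z.
Proof.
rewrite /Esum (big_pred1 finset.set0); last by move=> T; rewrite /= finset.subset0.
by rewrite cards0 subnn expr0 mul1r big_set0 addr0.
Qed.


Lemma sign_id (t m : nat) : (t <= m)%N -> (-1) ^+ m * (-1) ^+ (m - t) = (-1) ^+ t :> R.
Proof.
move=> tm; rewrite -{1}(subnK tm) exprD mulrAC -expr2 -exprM mulnC exprM.
by rewrite sqrrN expr1n expr1n mul1r.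
Qed.

Definition Isum (x : 'I_n -> V) (f : V -> R) A : R :=
  \sum_(T : {set 'I_n} | T \subset A)
    (if (0 < #|T|)%N then (-1) ^+ (#|T|.-1) * f (\sum_(i in T) x i) else 0).

Lemma Isum_split x f A a : a \in A ->
  Isum x f A = Isum x f (A :\ a) + (-1) ^+ #|A :\ a| * Esum x (A :\ a) f (x a).
Proof.
move=> aA; rewrite /Isum (@split_sub _ _ A a aA) big_split /=; congr (_ + _).
rewrite /Esum mulr_sumr; apply: eq_bigr => T TAa.
have /andP[TA aT] : (T \subset A) && (a \notin T) by rewrite -subsetD1.
have tm : (#|T| <= #|A :\ a|)%N by apply: subset_leq_card.
rewrite cardsU1 aT add1n /= big_setU1 //= mulrA sign_id //.
Qed.

Lemma Isum0 x f : Isum x f finset.set0 = 0.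
Proof.
rewrite /Isum (big_pred1 finset.set0); last by move=> T; rewrite /= finset.subset0.
by rewrite cards0.
Qed.

Lemma incl_excl_Isum x f : incl_excl_sum f x = Isum x f [set: 'I_n]%SET.
Proof.
rewrite /incl_excl_sum /Isum -big_mkcondr /=.
by apply: eq_bigl => T; rewrite finset.subsetT.
Qed.

End Comb.
Arguments Esum {R d n} x A G z.
Arguments Esum_split {R d n} x A a G z.
Arguments Esum0 {R d n} x G z.
Arguments split_sub {n} W F A a.
Arguments Isum {R d n} x f A.
Arguments Isum_split {R d n} x f A a.
Arguments Isum0 {R d n} x f.
Arguments incl_excl_Isum {R d n} x f.

Section Ana.
Variables (R : realType) (d : nat).
Local Notation V := 'rV[R]_d.

Lemma derivable_shift (F : V -> R) z c v :
  derivable F (z + c) v -> derivable (fun p => F (p + c)) z v.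
Proof.
have E : (fun h : R => h^-1 *: (((fun p => F (p + c)) \o shift z) (h *: v) - (fun p => F (p + c)) z)) =
  (fun h => h^-1 *: ((F \o shift (z + c)) (h *: v) - F (z + c))).
  by apply: funext => h /=; rewrite addrA.
by rewrite /derivable E.
Qed.

Lemma derive_shift (F : V -> R) z c v :
  'D_v (fun p => F (p + c)) z = 'D_v F (z + c).
Proof.
have E : (fun h : R => h^-1 *: (((fun p => F (p + c)) \o shift z) (h *: v) - (fun p => F (p + c)) z)) =
  (fun h => h^-1 *: ((F \o shift (z + c)) (h *: v) - F (z + c))).
  by apply: funext => h /=; rewrite addrA.
by rewrite /derive E.
Qed.

Lemma line_derive (F : V -> R) z y (t : R) :
  derivable F (z + t *: y) y ->
  is_derive t 1 (fun s : R => F (z + s *: y)) ('D_y F (z + t *: y)).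
Proof.
have E : (fun h : R => h^-1 *: (((fun s : R => F (z + s *: y)) \o shift t) (h *: 1) - (fun s : R => F (z + s *: y)) t)) =
  (fun h => h^-1 *: ((F \o shift (z + t *: y)) (h *: y) - F (z + t *: y))).
  by apply: funext => h /=; rewrite [h *: 1]mulr1 scalerDl addrCA.
move=> dF; apply: DeriveDef; first by rewrite /derivable E.
by rewrite /derive E.
Qed.

End Ana.
Arguments derivable_shift {R d} F z c v.
Arguments derive_shift {R d} F z c v.
Arguments line_derive {R d} F z y t.

Section Main.
Variables (R : realType) (d : nat).
Local Notation V := 'rV[R]_d.
Variable C : set V.
Hypothesis hC : open_convex_cone C.


Lemma coneD a b : C a -> C b -> C (a + b).
Proof.
case: hC => _ [cv cn] Ca Cb.
have h2 : (0 : R) < 2 by [].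
have := cn _ 2 (cv a b (1/2) Ca Cb _ _) h2.
rewrite scalerDr !scalerA (_ : 2 * (1/2) = 1 :> R); last by field.
rewrite (_ : 2 * (1 - 1/2) = 1 :> R); last by field.
rewrite !scale1r; apply.
  by rewrite divr_ge0.
by rewrite ler_pdivrMr // mul1r ler1n.
Qed.


Lemma cone_pos a (t : R) : C a -> 0 < t -> C (t *: a).
Proof. by case: hC => _ [_ cn] Ca t0; apply: cn. Qed.

Lemma Esum_derive n (x : 'I_n -> V) (G : V -> R) v :
  (forall i, C (x i)) -> (forall q, C q -> derivable G q v) ->
  forall A p, C p ->
  derivable (Esum x A G) p v /\ 'D_v (Esum x A G) p = Esum x A ('D_v G) p.
Proof.
move=> Cx dG A; elim: {A}#|A| {-2}A (erefl #|A|) => [|k IH] A cA p Cp.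
  have -> : A = finset.set0 by apply/eqP; rewrite -cards_eq0 cA.
  have -> : Esum x finset.set0 G = G by apply: funext => q; rewrite Esum0.
  by split; [exact: dG | rewrite Esum0].
have [a aA] : exists a, a \in A by apply/set0Pn; rewrite -card_gt0 cA.
have cA' : #|A :\ a| = k by move: cA; rewrite (cardsD1 a) aA => -[].
have -> : Esum x A G = (fun q => Esum x (A :\ a) G (q + x a)) - Esum x (A :\ a) G.
  by apply: funext => q; rewrite (Esum_split _ _ _ _ _ aA).
have Cpa : C (p + x a) by apply: coneD.
have [d1 e1] := IH _ cA' _ Cpa.
have [d2 e2] := IH _ cA' _ Cp.
have d1' := derivable_shift _ _ _ _ d1.
split; first exact: derivableB.
rewrite deriveB // derive_shift e1 e2 (Esum_split _ _ _ _ _ aA) //.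
Qed.


Lemma closure_pt p q : (forall t : R, 0 < t -> C (p + t *: q)) -> closure C p.
Proof.
move=> H B /nbhs_ballP [e e0 Be].
have q1 : 0 < 1 + `|q| by have := normr_ge0 q; lra.
pose t := e / (1 + `|q|).
have t0 : 0 < t by rewrite divr_gt0.
exists (p + t *: q); split; first exact: H.
apply: Be; rewrite -ball_normE /= opprD addrA subrr add0r normrN normrZ gtr0_norm //.
by rewrite /t mulrAC ltr_pdivrMr // mulrDr mulr1 ltrDr.
Qed.

Lemma u_cvg (p : V) (m : nat) (c : V) :
  (fun t : R => p + (t * m%:R) *: c) @ (0 : R)^'+ --> p.
Proof.
apply: cvg_at_right_filter.
suff : (fun t : R => p + (t * m%:R) *: c) @ (0 : R) --> p + (0 * m%:R) *: c.
  by rewrite mul0r scale0r addr0.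
apply: cvgD; first exact: cvg_cst.
apply: cvgZl; apply: cvgMl; exact: cvg_id.
Qed.

Lemma g_cvg (g : V -> R) (p : V) (m : nat) (c : V) : {within closure C, continuous g} ->
  closure C p -> (forall t : R, 0 < t -> closure C (p + (t * m%:R) *: c)) ->
  (fun t : R => g (p + (t * m%:R) *: c)) @ (0 : R)^'+ --> g p.
Proof.
move=> /subspace_continuousP gc Cp Ct.
apply: (cvg_comp _ _ _ (gc p Cp)).
move=> P /= HP.
have HP' : nbhs p (fun y => closure C y -> P y) by exact: HP.
have := u_cvg p m c _ HP'.
move=> H1; near=> t.
have : closure C (p + (t * m%:R) *: c) -> P (p + (t * m%:R) *: c) by near: t.
apply; apply: Ct; near: t; exact: nbhs_right_gt.
Unshelve. all: by end_near. Qed.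

Lemma limit_sum (J : finType) (aj : J -> R) (p : J -> V) (m : J -> nat) (c : V) g :
  {within closure C, continuous g} -> (forall j, closure C (p j)) ->
  (forall j (t : R), 0 < t -> closure C (p j + (t * (m j)%:R) *: c)) ->
  (forall t : R, 0 < t -> 0 <= \sum_j aj j * g (p j + (t * (m j)%:R) *: c)) ->
  0 <= \sum_j aj j * g (p j).
Proof.
move=> gc Cp Ct H.
have cv : (fun t : R => \sum_j aj j * g (p j + (t * (m j)%:R) *: c)) @ (0 : R)^'+ -->
   \sum_j aj j * g (p j).
  apply: cvg_big => [|j _]; first exact: add_continuous.
  have gj := g_cvg _ _ _ _ gc (Cp j) (Ct j).
  exact: (@cvgMl_tmp R R _ _ _ (aj j) _ gj).
apply: (closed_cvg _ (@closed_ge R 0) _ _ cv).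
near=> t; apply: H; near: t; exact: nbhs_right_gt.
Unshelve. all: by end_near. Qed.

Lemma closure_int a c s : closure C a -> C c -> 0 < s -> C (a + s *: c).
Proof.
move=> Ca Cc s0; case: hC => oC _.
have /nbhs_ballP [r r0 Br] : nbhs c C by apply: open_nbhs_nbhs.
have [y [Cy By]] := Ca _ (nbhsx_ballx a (s * r) (mulr_gt0 s0 r0)).
have -> : a + s *: c = y + s *: (c + s^-1 *: (a - y)).
  by rewrite scalerDr scalerA mulfV ?gt_eqF // scale1r addrCA [a - y]addrC addNKr addrC.
apply: coneD => //; apply: cone_pos => //; apply: Br.
move: By; rewrite -ball_normE /= opprD addrA subrr add0r normrN normrZ.
by rewrite gtr0_norm ?invr_gt0 // ltr_pdivrMl // mulrC.
Qed.

Lemma closureD a b : (exists c, C c) -> closure C a -> closure C b -> closure C (a + b).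
Proof.
move=> [c Cc] Ca Cb; apply: (@closure_pt _ c) => t t0.
have -> : a + b + t *: c = (a + (t / 2) *: c) + (b + (t / 2) *: c).
  by rewrite addrACA -scalerDl -splitr.
by apply: coneD; apply: closure_int => //; rewrite divr_gt0.
Qed.

Lemma closure0 : (exists c, C c) -> closure C 0.
Proof.
move=> [c Cc]; apply: (@closure_pt _ c) => t t0.
by rewrite add0r; apply: cone_pos.
Qed.

Lemma closure_sum n (T : {set 'I_n}) (y : 'I_n -> V) : (exists c, C c) ->
  (forall i, closure C (y i)) -> closure C (\sum_(i in T) y i).
Proof.
move=> C0 Cy; apply: (big_ind (closure C)) => //; first exact: closure0.
by move=> *; apply: closureD.
Qed.


Variable f : V -> R.
Hypothesis hf : completely_monotone C f.

Lemma Esum_sign n (x : 'I_n -> V) : (forall i, C (x i)) ->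
  forall (A : {set 'I_n}) ws z, (forall v, v \in ws -> C v) -> C z ->
  0 <= (-1) ^+ (size ws + #|A|) * Esum x A (iter_dir_deriv f ws) z.
Proof.
move=> Cx A; elim: {A}#|A| {-2}A (erefl #|A|) => [|k IH] A cA ws z Cws Cz.
  have -> : A = finset.set0 by apply/eqP; rewrite -cards_eq0 cA.
  rewrite Esum0 cards0 addn0.
  case: hf => [f0 [_ cm]]; case: ws Cws => [|w ws] Cws.
    by rewrite expr0 mul1r; apply: f0.
  by apply: cm.
have [a aA] : exists a, a \in A by apply/set0Pn; rewrite -card_gt0 cA.
have cA' : #|A :\ a| = k by move: cA; rewrite (cardsD1 a) aA => -[].
case: hf => [_ [sm _]].
set G := iter_dir_deriv f ws.
pose h := fun t : R => Esum x (A :\ a) G (z + t *: x a).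
pose df := fun t : R => Esum x (A :\ a) (iter_dir_deriv f (x a :: ws)) (z + t *: x a).
have Pt (t : R) : 0 <= t -> C (z + t *: x a).
  rewrite le_eqVlt => /orP[/eqP <-|t0]; first by rewrite scale0r addr0.
  by apply: coneD => //; apply: cone_pos.
have Hd (t : R) : 0 <= t -> is_derive t 1 h (df t).
  move=> t0.
  have [dE eE] := Esum_derive _ x G (x a) Cx (fun q Cq => diff_derivable (v := x a) (sm ws q Cq)) (A :\ a) _ (Pt t t0).
  have := line_derive (Esum x (A :\ a) G) z (x a) t dE.
  by rewrite eE.
have cont : {within `[0, 1], continuous h}.
  apply: derivable_within_continuous => t; rewrite in_itv /= => /andP[t0 _].
  by have [] := Hd t t0.
have [c c01 eqc] := MVT_segment ler01 (fun t t01 => Hd t (ltW (ltac:(by rewrite (itvP t01)) : 0 < t))) cont.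
have c0 : 0 <= c by rewrite (itvP c01).
have := IH _ cA' (x a :: ws) (z + c *: x a) _ (Pt c c0).
have eqh : Esum x A G z = h 1 - h 0.
  by rewrite /h scale1r scale0r addr0 (Esum_split _ _ _ _ _ aA).
rewrite eqh eqc subr0 mulr1 /= cA cA' addSnnS; apply.
by move=> v; rewrite inE => /orP[/eqP ->|]; [apply: Cx | apply: Cws].
Qed.

Lemma Isum_ge0 n (x : 'I_n -> V) : (forall i, C (x i)) ->
  forall A, 0 <= Isum x f A.
Proof.
move=> Cx A; elim: {A}#|A| {-2}A (erefl #|A|) => [|k IH] A cA.
  have -> : A = finset.set0 by apply/eqP; rewrite -cards_eq0 cA.
  by rewrite Isum0.
have [a aA] : exists a, a \in A by apply/set0Pn; rewrite -card_gt0 cA.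
have cA' : #|A :\ a| = k by move: cA; rewrite (cardsD1 a) aA => -[].
rewrite (Isum_split _ _ _ _ aA); apply: addr_ge0; first exact: IH.
by have := Esum_sign _ _ Cx (A :\ a) [::] (x a) (fun v (H : v \in [::]) => ltac:(by [])) (Cx a).
Qed.

Lemma part1 n (x : 'I_n -> V) : (forall i, C (x i)) -> 0 <= incl_excl_sum f x.
Proof. by move=> Cx; rewrite incl_excl_Isum; apply: Isum_ge0. Qed.

End Main.
Arguments part1 {R d C} hC {f} hf {n x}.
Arguments Esum_sign {R d C} hC {f} hf {n x}.
Arguments limit_sum {R d C J aj p m c g}.
Arguments closure_int {R d C} hC {a c s}.
Arguments closure_sum {R d C} hC {n T y}.
Arguments cone_pos {R d C} hC {a t}.

Theorem theorem4p4 (R : realType) (d : nat) (C : set 'rV[R]_d)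
    (f : 'rV[R]_d -> R) :
  open_convex_cone C -> completely_monotone C f ->
  (forall (n : nat) (x : 'I_n -> 'rV[R]_d), (1 <= n)%N ->
     (forall i, C (x i)) -> 0 <= incl_excl_sum f x) /\
  (forall g : 'rV[R]_d -> R,
     {within closure C, continuous g} -> (forall y, C y -> g y = f y) ->
     forall (n : nat) (x : 'I_n -> 'rV[R]_d), (1 <= n)%N ->
       (forall i, closure C (x i)) ->
       0 <= incl_excl_sum g x /\ incl_excl_sum g x <= g 0).
Proof.
move=> hC hf; split.
  by move=> n x _ Cx; apply: (part1 hC hf).
move=> g gc gf n x n1 Cx.
have [c [Cc _]] := Cx (Ordinal n1) setT filterT.
have C0 : exists c, C c by exists c.
have sumE (t : R) (T : {set 'I_n}) :
    \sum_(i in T) (x i + t *: c) = \sum_(i in T) x i + (t * #|T|%:R) *: c.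
  by rewrite big_split /= sumr_const scalerMnl mulr_natr.
pose aT (T : {set 'I_n}) : R := if (0 < #|T|)%N then (-1) ^+ (#|T|.-1) else 0.
have E1 : incl_excl_sum g x = \sum_(T : {set 'I_n}) aT T * g (\sum_(i in T) x i).
  rewrite /incl_excl_sum big_mkcond; apply: eq_bigr => T _; rewrite /aT.
  by case: ifP => _; rewrite ?mul0r.
have clT (T : {set 'I_n}) : closure C (\sum_(i in T) x i).
  exact: (closure_sum hC).
have Cxt (t : R) : 0 < t -> forall i, C (x i + t *: c).
  by move=> t0 i; apply: (closure_int hC).
split.
  rewrite E1; apply: (limit_sum (aj := aT) (p := fun T => \sum_(i in T) x i) (m := fun T => #|T|) (c := c) gc) => //.
    move=> T t t0; case: (posnP #|T|) => [->|T0].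
      by rewrite mulr0 scale0r addr0.
    apply: subset_closure; apply: (closure_int hC) => //.
    by rewrite mulr_gt0 // ltr0n.
  move=> t t0; have := part1 hC hf (Cxt t t0).
  rewrite /incl_excl_sum big_mkcond /=; move=> H; apply: (le_trans H); rewrite le_eqVlt; apply/orP; left.
  apply/eqP; apply: eq_bigr => T _; rewrite /aT sumE; case: ifP => T0; last by rewrite mul0r.
  rewrite gf //; apply: (closure_int hC) => //.
  by rewrite mulr_gt0 // ltr0n.
have E2 : g 0 - incl_excl_sum g x = \sum_(T : {set 'I_n}) (-1) ^+ #|T| * g (\sum_(i in T) x i).
  rewrite (bigD1 finset.set0) //= cards0 expr0 mul1r big_set0; congr (_ + _).
  rewrite /incl_excl_sum -sumrN; apply: eq_big => T; first by rewrite card_gt0.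
  by move=> T0; rewrite -[in RHS](prednK T0) exprS mulN1r mulNr.
rewrite -subr_ge0 E2.
apply: (limit_sum (aj := fun T : {set 'I_n} => (-1) ^+ #|T|) (p := fun T => \sum_(i in T) x i) (m := fun T => #|T|.+1) (c := c) gc) => //.
  move=> T t t0; apply: subset_closure; apply: (closure_int hC) => //.
  by rewrite mulr_gt0 // ltr0n.
move=> t t0.
have := Esum_sign hC hf (Cxt t t0) [set: 'I_n]%SET [::] (t *: c)
   (fun v (H : v \in [::]) => ltac:(by [])) (cone_pos hC Cc t0).
rewrite /Esum mulr_sumr /= add0n; move=> H; apply: (le_trans H); rewrite le_eqVlt; apply/orP; left.
apply/eqP; rewrite [RHS](eq_bigl (fun T : {set 'I_n} => T \subset [set: 'I_n]%SET)); last first.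
  by move=> T; rewrite finset.subsetT.
apply: eq_bigr => T _.
have Tn : (#|T| <= #|[set: 'I_n]%SET|)%N by rewrite cardsT max_card.
rewrite mulrA sign_id // sumE.
have -> : t *: c + (\sum_(i in T) x i + (t * #|T|%:R) *: c) =
    \sum_(i in T) x i + (t * #|T|.+1%:R) *: c.
  by rewrite addrCA -scalerDl; congr (_ + _ *: _); rewrite -natr1 mulrDr mulr1 addrC.
rewrite gf //; apply: (closure_int hC) => //.
by rewrite mulr_gt0 // ltr0n.
Qed.
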